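(* In the setting of the context, assume in addition that $\frac1q\|\cdot\|^q$ is $(q,\beta)$-uniformly convex w.r.t. $\|\cdot\|$ for some $\beta>0$. Let $i\ge1$, let $u_i\in\partial f(x_i)$ be the subgradient used in $E_i$, and let $\zeta_i\in\partial\bigl(\frac1q\|\cdot\|^q\bigr)(x_i-\hat x_{i-1})$. Then for any $\gamma_i'\in(0,\gamma]$, $$E_i\le a_i\Bigl\langle u_i+\frac{\gamma_i'A_i^{q-1}}{a_i^q}\zeta_i,\ \hat z_i-z_i\Bigr\rangle-\gamma_i'\Bigl(\frac{A_i^q}{q\,a_i^q}\|x_i-\hat x_{i-1}\|^q+\frac{\beta}{q}\|\hat z_i-z_i\|^q\Bigr).$$
   Context: $\|\cdot\|$ is a norm on $\mathbb{R}^d$. A function $\varphi:\mathbb{R}^d\to\mathbb{R}\cup\{+\infty\}$ is $(s,\sigma)$-uniformly convex w.r.t. $\|\cdot\|$ ($s\ge2$, $\sigma>0$) if $\varphi(y)\ge\varphi(x)+\langle\zeta,y-x\rangle+\frac{\sigma}{s}\|y-x\|^s$ for all $y$, all $x$ with $\partial\varphi(x)\ne\emptyset$ and all $\zeta\in\partial\varphi(x)$. $f=g+l$ with $g:\mathbb{R}^d\to\mathbb{R}$ convex and differentiable and $l:\mathbb{R}^d\to\mathbb{R}\cup\{+\infty\}$ proper, closed, convex. $\hat f(x;y):=g(y)+\langle\nabla g(y),x-y\rangle+l(x)$. Fix $q\ge2$, $\gamma>0$, $x_0\in\mathrm{dom}\,l$, and $h(\cdot;x_0):\mathbb{R}^d\to\mathbb{R}$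 convex with $h(x;x_0)\ge0$, $h(x;x_0)=0$ iff $x=x_0$, $(q,\gamma)$-uniformly convex w.r.t. $\|\cdot\|$. Let $a_1,a_2,\dots>0$, $A_0:=0$, $A_i:=A_{i-1}+a_i$. For points $x_1,x_2,\dots\in\mathrm{dom}\,\partial l$: $\psi_k(x):=\sum_{j=1}^ka_j\hat f(x;x_j)+h(x;x_0)$, $z_0:=x_0$, $z_k:=\operatorname{argmin}\psi_k$ ($k\ge 1$); $\hat x_{i-1}:=\frac{a_i}{A_i}z_{i-1}+\frac{A_{i-1}}{A_i}x_{i-1}$, $\hat z_i:=\frac{A_i}{a_i}x_i-\frac{A_{i-1}}{a_i}x_{i-1}$; for $u_i\in\partial f(x_i)=\nabla g(x_i)+\partial l(x_i)$, $E_i:=A_i\langle u_i,x_i-\frac{a_i}{A_i}z_i-\frac{A_{i-1}}{A_i}x_{i-1}\rangle-\frac{\gamma}{q}\|z_i-z_{i-1}\|^q$. *)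

(* Defs.v *)
From Stdlib Require Import Reals.
From Stdlib Require Vectors.Fin.
Open Scope R_scope.

Definition vec (d : nat) := Fin.t d -> R.

Fixpoint fsum (d : nat) : (Fin.t d -> R) -> R :=
  match d with
  | O => fun _ => 0
  | S n => fun f => f Fin.F1 + fsum n (fun i => f (Fin.FS i))
  end.

Definition vadd {d} (x y : vec d) : vec d := fun i => x i + y i.
Definition vsub {d} (x y : vec d) : vec d := fun i => x i - y i.
Definition vscal {d} (c : R) (x : vec d) : vec d := fun i => c * x i.
Definition vzero {d} : vec d := fun _ => 0.
Definition inner {d} (x y : vec d) : R := fsum d (fun i => x i * y i).

Definition is_norm {d} (N : vec d -> R) : Prop :=
  (forall x, 0 <= N x) /\
  (forall x, N x = 0 -> x = vzero) /\
  (forall c x, N (vscal c x) = Rabs c * N x) /\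
  (forall x y, N (vadd x y) <= N x + N y).

Definition powr (t p : R) : R := if Rle_dec t 0 then 0 else Rpower t p.

Definition convex_fun {d} (phi : vec d -> R) : Prop :=
  forall x y t, 0 <= t <= 1 ->
    phi (vadd (vscal t x) (vscal (1 - t) y)) <= t * phi x + (1 - t) * phi y.

Definition subgrad {d} (phi : vec d -> R) (x z : vec d) : Prop :=
  forall y, phi y >= phi x + inner z (vsub y x).

Definition unif_convex {d} (N : vec d -> R) (s sigma : R) (phi : vec d -> R) : Prop :=
  forall x z, subgrad phi x z ->
    forall y, phi y >= phi x + inner z (vsub y x) + sigma / s * powr (N (vsub y x)) s.

Definition is_grad {d} (N : vec d -> R) (g : vec d -> R) (x G : vec d) : Prop :=
  forall eps, 0 < eps -> exists del, 0 < del /\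
    forall k, N k < del -> Rabs (g (vadd x k) - g x - inner G k) <= eps * N k.

Inductive ereal := EFin (r : R) | EInf.

Definition ele (a b : ereal) : Prop :=
  match a, b with
  | _, EInf => True
  | EInf, EFin _ => False
  | EFin r, EFin s => r <= s
  end.
Definition eadd (a b : ereal) : ereal :=
  match a, b with EFin r, EFin s => EFin (r + s) | _, _ => EInf end.
(* multiplication by a positive scalar *)
Definition escal (c : R) (a : ereal) : ereal :=
  match a with EFin r => EFin (c * r) | EInf => EInf end.
Definition elt (t : R) (a : ereal) : Prop :=
  match a with EFin r => t < r | EInf => True end.

Definition in_dom {d} (l : vec d -> ereal) (x : vec d) : Prop := exists r, l x = EFin r.
Definition proper {d} (l : vec d -> ereal) : Prop := exists x, in_dom l x.
Definition econvex {d} (l : vec d -> ereal) : Prop :=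
  forall x y rx ry t, 0 <= t <= 1 -> l x = EFin rx -> l y = EFin ry ->
    ele (l (vadd (vscal t x) (vscal (1 - t) y))) (EFin (t * rx + (1 - t) * ry)).
(* closed = lower semicontinuous *)
Definition eclosed {d} (N : vec d -> R) (l : vec d -> ereal) : Prop :=
  forall x t, elt t (l x) -> exists del, 0 < del /\
    forall y, N (vsub y x) < del -> elt t (l y).
Definition esubgrad {d} (l : vec d -> ereal) (x z : vec d) : Prop :=
  exists rx, l x = EFin rx /\
    forall y, ele (EFin (rx + inner z (vsub y x))) (l y).
Definition is_argmin {d} (phi : vec d -> ereal) (z : vec d) : Prop :=
  (exists r, phi z = EFin r) /\ forall y, ele (phi z) (phi y).

Fixpoint Asum (a : nat -> R) (k : nat) : R :=
  match k with O => 0 | S k' => Asum a k' + a (S k') end.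

Definition fhat {d} (g : vec d -> R) (grad : vec d -> vec d) (l : vec d -> ereal)
  (x y : vec d) : ereal :=
  eadd (EFin (g y + inner (grad y) (vsub x y))) (l x).

Fixpoint psi_sum {d} (g : vec d -> R) (grad : vec d -> vec d) (l : vec d -> ereal)
  (a : nat -> R) (xs : nat -> vec d) (k : nat) (x : vec d) : ereal :=
  match k with
  | O => EFin 0
  | S k' => eadd (psi_sum g grad l a xs k' x) (escal (a (S k')) (fhat g grad l x (xs (S k'))))
  end.

Definition psi {d} (g : vec d -> R) (grad : vec d -> vec d) (l : vec d -> ereal)
  (h : vec d -> R) (a : nat -> R) (xs : nat -> vec d) (k : nat) (x : vec d) : ereal :=
  eadd (psi_sum g grad l a xs k x) (EFin (h x)).

Definition xhat {d} (a : nat -> R) (z xs : nat -> vec d) (k : nat) : vec d :=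
  vadd (vscal (a (S k) / Asum a (S k)) (z k)) (vscal (Asum a k / Asum a (S k)) (xs k)).

Definition zhat {d} (a : nat -> R) (xs : nat -> vec d) (i : nat) : vec d :=
  vsub (vscal (Asum a i / a i) (xs i)) (vscal (Asum a (i - 1)%nat / a i) (xs (i - 1)%nat)).

Definition Eerr {d} (N : vec d -> R) (q gam : R) (a : nat -> R) (z xs : nat -> vec d)
  (u : vec d) (i : nat) : R :=
  Asum a i * inner u (vsub (vsub (xs i) (vscal (a i / Asum a i) (z i)))
                           (vscal (Asum a (i - 1)%nat / Asum a i) (xs (i - 1)%nat)))
  - gam / q * powr (N (vsub (z i) (z (i - 1)%nat))) q.

(* Main.v *)
Require Import Defs.
From Stdlib Require Import Reals Lra Lia FunctionalExtensionality.
Open Scope R_scope.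

Lemma fsum_plus d (f g : Fin.t d -> R) : fsum d (fun i => f i + g i) = fsum d f + fsum d g.
Proof. induction d; simpl. lra. rewrite (IHd (fun i => f (Fin.FS i)) (fun i => g (Fin.FS i))). lra. Qed.
Lemma fsum_scal d c (f : Fin.t d -> R) : fsum d (fun i => c * f i) = c * fsum d f.
Proof. induction d; simpl. lra. rewrite (IHd (fun i => f (Fin.FS i))). lra. Qed.
Lemma inner_scal_r d (u v : vec d) c : inner u (vscal c v) = c * inner u v.
Proof. unfold inner, vscal. rewrite <- fsum_scal. f_equal. apply functional_extensionality; intro; ring. Qed.
Lemma inner_add_scal_l d (u w v : vec d) k : inner (vadd u (vscal k w)) v = inner u v + k * inner w v.
Proof. unfold inner, vscal, vadd. rewrite <- fsum_scal, <- fsum_plus. f_equal. apply functional_extensionality; intro; ring. Qed.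
Lemma Asum_nonneg a (Ha : forall j, (1 <= j)%nat -> 0 < a j) k : 0 <= Asum a k.
Proof. induction k; simpl. lra. specialize (Ha (S k)). assert (0 < a (S k)) by (apply Ha; lia). lra. Qed.
Lemma powr_pos c q : 0 < c -> powr c q = Rpower c q.
Proof. intros. unfold powr. destruct (Rle_dec c 0); [lra|auto]. Qed.
Lemma powr_mul c t q : 0 < c -> 0 <= t -> powr (c * t) q = powr c q * powr t q.
Proof. intros Hc Ht. destruct (Req_dec t 0) as [->|Hne].
 - unfold powr. rewrite Rmult_0_r. destruct (Rle_dec 0 0); [|lra]. ring.
 - rewrite !powr_pos; try nra. symmetry. apply Rpower_mult_distr; lra. Qed.
Lemma powr_nonneg t q : 0 <= powr t q.
Proof. unfold powr. destruct (Rle_dec t 0). lra. unfold Rpower. left; apply exp_pos. Qed.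
Lemma Rpower_posit c q : 0 < Rpower c q.
Proof. unfold Rpower. apply exp_pos. Qed.

Lemma key (q g g' Pc c nw n1 nz I Iu a k beta: R) : 0 < q -> 0 < Pc -> 0 < g' <= g -> 0 <= n1 ->
  a*k = g'*c/Pc ->
  1/q*(Pc*n1) >= 1/q*nw + -(c*I) + beta/q*(Pc*nz) ->
  a*Iu - g/q*n1 <= a*(Iu + k*I) - g'*(1/(q*Pc)*nw + beta/q*nz).
Proof.
  intros Hq HP Hg Hn Hk H.
  assert (H2 : g'/Pc * (1/q*nw + -(c*I) + beta/q*(Pc*nz)) <= g'/Pc * (1/q*(Pc*n1))).
  { apply Rmult_le_compat_l. apply Rlt_le, Rdiv_lt_0_compat; lra. lra. }
  assert (E1 : g'/Pc * (1/q*(Pc*n1)) = g'/q*n1) by (field; lra).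
  assert (E2 : g'/Pc * (1/q*nw + -(c*I) + beta/q*(Pc*nz)) = g'*(1/(q*Pc)*nw + beta/q*nz) - g'*c/Pc*I) by (field; lra).
  assert (g'/q*n1 <= g/q*n1). { unfold Rdiv. apply Rmult_le_compat_r; auto. apply Rmult_le_compat_r. left; apply Rinv_0_lt_compat; lra. lra. }
  rewrite Rmult_plus_distr_l, <- Rmult_assoc, Hk. lra.
Qed.

Theorem mainTheorem8
  (d : nat) (N : vec d -> R) (HN : is_norm N)
  (g : vec d -> R) (grad : vec d -> vec d) (l : vec d -> ereal)
  (Hg_conv : convex_fun g) (Hg_grad : forall y, is_grad N g y (grad y))
  (Hl_proper : proper l) (Hl_closed : eclosed N l) (Hl_conv : econvex l)
  (q gam : R) (Hq : 2 <= q) (Hgam : 0 < gam)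
  (x0 : vec d) (Hx0 : in_dom l x0)
  (h : vec d -> R) (Hh_conv : convex_fun h) (Hh_nonneg : forall x, 0 <= h x)
  (Hh_zero : forall x, h x = 0 <-> x = x0) (Hh_uc : unif_convex N q gam h)
  (a : nat -> R) (Ha : forall j, (1 <= j)%nat -> 0 < a j)
  (xs : nat -> vec d) (Hxs0 : xs 0%nat = x0)
  (Hxs : forall k, (1 <= k)%nat -> exists v, esubgrad l (xs k) v)
  (z : nat -> vec d) (Hz0 : z 0%nat = x0)
  (Hz : forall k, (1 <= k)%nat -> is_argmin (psi g grad l h a xs k) (z k))
  (beta : R) (Hbeta : 0 < beta)
  (Hphi : unif_convex N q beta (fun v => 1 / q * powr (N v) q))
  (i : nat) (Hi : (1 <= i)%nat)
  (u : vec d) (Hu : exists v, esubgrad l (xs i) v /\ u = vadd (grad (xs i)) v)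
  (zeta : vec d)
  (Hzeta : subgrad (fun v => 1 / q * powr (N v) q) (vsub (xs i) (xhat a z xs (i - 1)%nat)) zeta)
  (gam' : R) (Hgam' : 0 < gam' <= gam) :
  Eerr N q gam a z xs u i <=
    a i * inner (vadd u (vscal (gam' * powr (Asum a i) (q - 1) / powr (a i) q) zeta))
                (vsub (zhat a xs i) (z i))
    - gam' * (powr (Asum a i) q / (q * powr (a i) q)
                * powr (N (vsub (xs i) (xhat a z xs (i - 1)%nat))) q
              + beta / q * powr (N (vsub (zhat a xs i) (z i))) q).
Proof.
  destruct i as [|j]; [lia|]. replace (S j - 1)%nat with j in * by lia.
  set (A := Asum a (S j)). set (A' := Asum a j). set (ai := a (S j)).
  assert (Hai : 0 < ai) by (apply Ha; lia).
  assert (HA' : 0 <= A') by (apply Asum_nonneg; auto).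
  assert (HAe : A = A' + ai) by reflexivity.
  assert (HA : 0 < A) by lra.
  set (c := ai / A). assert (Hc : 0 < c) by (apply Rdiv_lt_0_compat; lra).
  set (w := vsub (xs (S j)) (xhat a z xs j)).
  set (zh := zhat a xs (S j)).
  set (y := vscal c (vsub (z (S j)) (z j))).
  destruct HN as [Nn [_ [Nh _]]].
  assert (Ey : vsub y w = vscal (-c) (vsub zh (z (S j)))).
  { apply functional_extensionality; intro t. unfold y, w, zh, xhat, zhat, vsub, vscal, vadd, c.
    fold A A' ai. replace (S j - 1)%nat with j by lia. fold A'. field. lra. }
  assert (Ex : vsub (vsub (xs (S j)) (vscal (ai / A) (z (S j)))) (vscal (A' / A) (xs j)) = vscal c (vsub zh (z (S j)))).
  { apply functional_extensionality; intro t. unfold zh, zhat, vsub, vscal, c.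
    fold A A' ai. replace (S j - 1)%nat with j by lia. fold A'. field. lra. }
  pose proof (Hphi w zeta Hzeta y) as H. cbv beta in H. rewrite Ey in H.
  unfold y in H. rewrite !Nh, inner_scal_r in H.
  rewrite Rabs_pos_eq in H by lra. rewrite Rabs_Ropp, Rabs_pos_eq in H by lra.
  rewrite !powr_mul in H by (auto; lra).
  destruct Hu as [v [_ ->]].
  unfold Eerr. replace (S j - 1)%nat with j by lia. fold A A' ai. rewrite Ex. fold w zh.
  rewrite inner_scal_r, inner_add_scal_l.
  set (Pc := powr c q) in *.
  assert (HPc : Pc = Rpower c q) by (apply powr_pos; auto).
  assert (HPcp : 0 < Pc) by (rewrite HPc; apply Rpower_posit).
  assert (Hai_e : ai = c * A) by (unfold c; field; lra).
  assert (HRa : powr ai q = Pc * powr A q).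
  { rewrite Hai_e. rewrite !powr_pos by (auto; nra). rewrite HPc. symmetry. apply Rpower_mult_distr; lra. }
  assert (HRA : powr A q = powr A (q-1) * A).
  { rewrite !powr_pos by lra. replace q with ((q-1) + 1) at 1 by ring. rewrite Rpower_plus, Rpower_1; lra. }
  assert (HRA1 : 0 < powr A (q-1)) by (rewrite powr_pos by lra; apply Rpower_posit).
  rewrite HRa, HRA.
  replace (A * (c * inner (vadd (grad (xs (S j))) v) (vsub zh (z (S j))))) with
    (ai * inner (vadd (grad (xs (S j))) v) (vsub zh (z (S j)))) by (rewrite Hai_e; ring).
  replace (powr A (q - 1) * A / (q * (Pc * (powr A (q - 1) * A)))) with (1/(q*Pc)) by (field; repeat split; lra).
  apply key with (c := c); try lra.
  all: try apply powr_nonneg.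
  all: try (rewrite Hai_e; field; repeat split; lra).
Qed.
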